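(* Let $R$ be an environment with a single door pixel $s$, and let $A=|R|$ be the number of its pixels. Run the Depth-First Leader-Follower (DFLF) strategy defined in the context. The algorithm halts exactly when all pixels of $R$ are occupied by robots, and its makespan is $2A-1$.
   Context: Pixels are the unit squares of the integer grid, identified with their lower-left corners $(i,j)\in\mathbb{Z}^2$. Two pixels are neighbors if they share an edge, so $(i,j)$ has the four neighbors $(i\pm1,j)$ and $(i,j\pm1)$. The environment $R$ is a finite set of pixels that is connected under this neighbor relation. It contains a single distinguished door pixel $s\in R$. Time is discrete, $t=0,1,2,\dots$. At each time, every pixel of $R$ holds at most one robot. $p(r,t)$ denotes the pixel occupied by robot $r$ at time $t$, and $\mathrm{prev}(r,t)=p(r,t-1)$. In one time step a robot either stays where it is or moves to a neighboring pixel of $R$ that is unoccupied. Vacating rule: if a robot occupies pixel $q$ at time $t$ and a different pixel at time $t+1$, then no robot occupies $q$ at time $t+1$; so the earliest a vacated pixel can be re-entered is time $t+2$. At time $0$ exactly one robot is present, on $s$. Door rule: whenever the robot on $s$ leaves, a new robot appears on $s$ as soon as the vacating rule allows. A pixel of $R$ is a frontier pixel at time $t$ if no robot has occupied it at any time $\le t$. The DFLF strategy works as follows. - Each robot is either moving or stopped. A moving robot is either the leader or a follower. - The first robot is the leader. Each newly appearing robot becomes the successor of the robot that most recently left the door, and that robot becomes its predecessor $\mathrm{pred}(r)$. These relations never change. - At each step, the leader behaves as follows. If the leader has a neighboring frontier pixel, it moves to one of them (chosen arbitrarily). Otherwise it becomes stopped permanently and leadership passes to its successor. If the leader has no frontier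 neighbor and is on the door $s$, the algorithm halts. - A follower $r$ moves at time $t$ to the pixel $\mathrm{prev}(\mathrm{pred}(r),t)$ previously occupied by its predecessor. - A stopped robot never moves again. Makespan: the first time $t^*$ at which every pixel of $R$ is occupied. *)

(* Defs.v *)
From HB Require Import structures.
From mathcomp Require Import all_boot all_order all_algebra.
From mathcomp Require Import finmap.
Set Implicit Arguments. Unset Strict Implicit. Unset Printing Implicit Defensive.

Local Open Scope fset_scope.

(* Pixels = lower-left corners in Z^2. *)
Definition pixel := (int * int)%type.

Definition adj (p q : pixel) : bool :=
  (absz (p.1 - q.1)%R + absz (p.2 - q.2)%R == 1)%N.

Definition env_connected (R : {fset pixel}) : Prop :=
  forall p q, p \in R -> q \in R ->
    exists l : seq pixel, path adj p l /\ last p l = q /\ all (fun x => x \in R) l.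

Inductive rstatus := Leader | Follower | Stopped.

(* Robots are labelled 0,1,2,... in their order
   of appearance.
   rpos k t  = pixel of robot k at time t (None = not yet appeared);
   rst k t   = status of robot k at time t (meaningful when present);
   rpred k   = predecessor of robot k (fixed once and for all);
   nrob t    = number of robots that have appeared by time t. *)
Record run := Run {
  rpos  : nat -> nat -> option pixel;
  rst   : nat -> nat -> rstatus;
  rpred : nat -> nat;
  nrob  : nat -> nat }.

Section DFLF.
Variables (R : {fset pixel}) (s : pixel) (X : run).

Definition occupied_at (q : pixel) (t : nat) : Prop :=
  exists k, rpos X k t = Some q.

Definition frontier (q : pixel) (t : nat) : Prop :=
  q \in R /\ forall t', t' <= t -> ~ occupied_at q t'.

Definition has_frontier_nbr (p : pixel) (t : nat) : Prop :=
  exists q, adj p q /\ frontier q t.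

Definition halts_at (t : nat) : Prop :=
  exists k, k < nrob X t /\ rst X k t = Leader /\ rpos X k t = Some s /\
            ~ has_frontier_nbr s t.

Definition all_occupied (t : nat) : Prop :=
  forall q, q \in R -> occupied_at q t.

(* robot k is on s at time t-1 and not on s at time t (it left the door
   during step t-1 -> t); by the vacating rule a new robot appears at t+1 *)
Definition left_door (t k : nat) : Prop :=
  0 < t /\ rpos X k t.-1 = Some s /\ rpos X k t <> Some s.

(* status at time t' of a non-first robot j that is not yet stopped:
   it is the leader iff its predecessor is stopped (leadership passed). *)
Definition inherited_status (j t' : nat) : rstatus :=
  if rst X (rpred X j) t' is Stopped then Leader else Follower.

Definition robot_step (k t : nat) : Prop :=
  match rst X k t with
  | Stopped => rpos X k t.+1 = rpos X k t /\ rst X k t.+1 = Stopped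
  | Leader => exists p, rpos X k t = Some p /\
      ((has_frontier_nbr p t /\
        exists q, adj p q /\ frontier q t /\
                  rpos X k t.+1 = Some q /\ rst X k t.+1 = Leader)
       \/ (~ has_frontier_nbr p t /\
           rpos X k t.+1 = Some p /\ rst X k t.+1 = Stopped))
  | Follower =>
      (* moves to prev(pred k, t) = position of pred k at time t-1 *)
      rpos X k t.+1 = rpos X (rpred X k) t.-1 /\
      rst X k t.+1 = inherited_status k t.+1
  end.

Definition door_step (t : nat) : Prop :=
  ((exists k, left_door t k) ->
     nrob X t.+1 = (nrob X t).+1 /\
     rpos X (nrob X t) t.+1 = Some s /\
     left_door t (rpred X (nrob X t)) /\   (* pred = robot that most recently left the door *)
     rst X (nrob X t) t.+1 = inherited_status (nrob X t) t.+1) /\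
  (~ (exists k, left_door t k) -> nrob X t.+1 = nrob X t).

(* X is an execution of DFLF on (R, s) (constrained up to the first halt) *)
Definition is_dflf_run : Prop :=
  [/\ nrob X 0 = 1, rpos X 0 0 = Some s, rst X 0 0 = Leader,
      (forall k t, nrob X t <= k -> rpos X k t = None) &
      (forall t, (forall t', t' <= t -> ~ halts_at t') ->
         (forall k, k < nrob X t -> robot_step k t) /\ door_step t)].

End DFLF.

(* Main.v *)
Require Import Defs.
From mathcomp Require Import all_boot all_order all_algebra.
From mathcomp Require Import finmap.
From mathcomp Require Import zify.
From Stdlib Require Import Classical.
Local Open Scope fset_scope.

Local Open Scope nat_scope.
Section Proof.
Variables (R : {fset pixel}) (s : pixel) (X : run).
Hypothesis Hrun : is_dflf_run R s X.

Definition Inv (t : nat) : Prop := exists S0 Qs L,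
 [/\ 2 * nrob X t <= t + 2 /\ t + 1 <= 2 * nrob X t, size S0 + 2 * L = t, size Qs = L,
     uniq (s :: S0 ++ Qs) & all (fun x => x \in R) (s :: S0 ++ Qs)] /\
 [/\ (forall r, r < L -> rpos X r t = Some (nth s Qs r) /\ rst X r t = Stopped),
     (forall r t', L <= r < nrob X t -> 2 * r <= t' <= t ->
        rpos X r t' = Some (nth s (s :: S0) (t' - 2 * r))),
     (forall r, L <= r < nrob X t -> rst X r t = if r == L then Leader else Follower),
     (forall r, 0 < r < nrob X t -> rpred X r = r.-1) &
     [/\ (forall x, (exists t', t' <= t /\ occupied_at X x t') <-> x \in s :: S0 ++ Qs) &
     (forall x, x \in Qs -> forall y, adj x y -> y \in R -> y \in s :: S0 ++ Qs)]].

Lemma nth_in (l : seq pixel) i : nth s (s :: l) i \in s :: l.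
Proof.
case: (ltnP i (size (s :: l))) => h; first exact: mem_nth.
by rewrite nth_default // mem_head.
Qed.

Lemma rpos_none k t : nrob X t <= k -> rpos X k t = None.
Proof. by case: Hrun => _ _ _ H _; apply: H. Qed.

Lemma onS t : Inv t -> forall k, rpos X k t = Some s <-> t = 2 * k.
Proof.
case=> S0 [Qs [L [[Hn HS HQ Hu Hall] [Hst Hhist Hstat Hpred [Hvis Hcl]]]]] k.
move: Hu; rewrite cons_uniq mem_cat negb_or => /andP [/andP [nS0 nQ] _].
split.
- case: (leqP (nrob X t) k) => hk; first by rewrite rpos_none.
  case: (ltnP k L) => hkL.
    case: (Hst k hkL) => -> _ [e].
    by move: nQ; rewrite -e mem_nth ?HQ.
  rewrite Hhist; last by lia. 2: by lia.
  case e: (t - 2 * k) => [|i]; first by lia.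
  move=> [/= e2].
  have hi : i < size S0 by lia.
  by move: nS0; rewrite -e2 mem_nth.
- move=> e.
  rewrite Hhist; last by lia. 2: by lia.
  by rewrite e subnn.
Qed.


Lemma sub_VS (S0 Qs : seq pixel) : {subset s :: S0 <= s :: S0 ++ Qs}.
Proof. by move=> y; rewrite !in_cons mem_cat => /orP [->|->]; rewrite ?orbT. Qed.

Lemma occ_in t S0 Qs L x : size Qs = L ->
  (forall r, r < L -> rpos X r t = Some (nth s Qs r)) ->
  (forall r, L <= r < nrob X t -> rpos X r t = Some (nth s (s :: S0) (t - 2 * r))) ->
  occupied_at X x t -> x \in s :: S0 ++ Qs.
Proof.
move=> HQ Hst Hh [k Hk].
case: (leqP (nrob X t) k) => h1; first by rewrite rpos_none in Hk.
case: (ltnP k L) => h2.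
  move: Hk; rewrite Hst // => -[<-].
  by rewrite in_cons mem_cat mem_nth ?orbT ?HQ.
move: Hk; rewrite Hh; last by rewrite h2 h1.
by case=> <-; apply: sub_VS; apply: nth_in.
Qed.

Lemma vis_step t (V V' : seq pixel) :
  (forall x, (exists t', t' <= t /\ occupied_at X x t') <-> x \in V) ->
  (forall x, occupied_at X x t.+1 -> x \in V') -> {subset V <= V'} ->
  (forall x, x \in V' -> x \in V \/ occupied_at X x t.+1) ->
  forall x, (exists t', t' <= t.+1 /\ occupied_at X x t') <-> x \in V'.
Proof.
move=> Hv H1 H2 H3 x; split.
- case=> t' [h1 h2]; case: (ltnP t' t.+1) => h3.
    by apply: H2; apply/Hv; exists t'.
  have e : t' = t.+1 by lia.
  by subst t'; apply: H1.
- move/H3 => [/Hv [t' [h1 h2]]|h]; first by exists t'; split=> //; lia.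
  by exists t.+1.
Qed.

Lemma inv_step t : (forall t', t' <= t -> ~ halts_at R s X t') -> Inv t ->
  (0 < t -> Inv t.-1) -> Inv t.+1.
Proof.
move=> Hnh Ht Htm.
have [Hstep Hdoor] : (forall k, k < nrob X t -> robot_step R X k t) /\ door_step s X t.
  by case: Hrun => _ _ _ _ H; apply: H.
have onSt := @onS t Ht.
have onStm : 0 < t -> forall k, rpos X k t.-1 = Some s <-> t.-1 = 2 * k.
  by move=> h; apply: onS; apply: Htm.
case: Ht => S0 [Qs [L [[Hn HS HQ Hu Hall] [Hst Hhist Hstat Hpred [Hvis Hcl]]]]].
have Hld : forall k, left_door s X t k <-> 0 < t /\ t = 2 * k + 1.
  move=> k; split.
  - case=> t0 [h1 h2]; move/(onStm t0 k): h1 => h1.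
    have h3 : t <> 2 * k by move=> e; apply: h2; apply/(onSt k).
    split=> //; lia.
  - case=> t0 e; split=> //; split.
    + apply/(onStm t0 k); lia.
    + by move/(onSt k); lia.
have [n' [Hn' En' Hnn' Hnew]] : exists n', [/\ 2 * n' <= t + 3 /\ t + 2 <= 2 * n',
   nrob X t.+1 = n', nrob X t <= n' <= (nrob X t).+1 &
   (n' = (nrob X t).+1 -> [/\ rpos X (nrob X t) t.+1 = Some s,
       rpred X (nrob X t) = (nrob X t).-1 &
       rst X (nrob X t) t.+1 = inherited_status X (nrob X t) t.+1])].
  case: Hdoor => Hd1 Hd2.
  case: (boolP (t.+1 == 2 * nrob X t)) => /eqP Hpar.
  - have hl : exists k, left_door s X t k by exists (nrob X t).-1; apply/Hld; lia.
    case: (Hd1 hl) => e1 [e2 [e3 e4]].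
    move/Hld: e3 => e3.
    exists (nrob X t).+1; split => //; try lia.
    move=> _; split => //; lia.
  - have hl : ~ (exists k, left_door s X t k) by case=> k /Hld; lia.
    exists (nrob X t); rewrite (Hd2 hl); split => //; lia.
have HLn : L < nrob X t by lia.
have Hstop : forall r, r < L -> rpos X r t.+1 = Some (nth s Qs r) /\ rst X r t.+1 = Stopped.
  move=> r hr; have := Hstep r (ltn_trans hr HLn).
  rewrite /robot_step; case: (Hst r hr) => e1 e2; rewrite e2 e1; by case.
have Hfol : forall k, L < k < nrob X t ->
    rpos X k t.+1 = Some (nth s (s :: S0) (t.+1 - 2 * k)) /\
    rst X k t.+1 = (if rst X k.-1 t.+1 is Stopped then Leader else Follower).
  move=> k hk; have := Hstep k (ltac:(lia)).
  rewrite /robot_step Hstat; last by lia.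
  rewrite (_ : (k == L) = false); last by apply/eqP; lia.
  rewrite /inherited_status Hpred; last by lia.
  case=> -> ->; split=> //.
  rewrite (Hhist k.-1 t.-1); [|lia|lia].
  congr (Some (nth _ _ _)); lia.
have Hact : forall k, L < k < n' ->
    rpos X k t.+1 = Some (nth s (s :: S0) (t.+1 - 2 * k)) /\
    rst X k t.+1 = (if rst X k.-1 t.+1 is Stopped then Leader else Follower).
  move=> k hk; case: (ltnP k (nrob X t)) => h; first by apply: Hfol; lia.
  have ek : k = nrob X t by lia.
  have e' : n' = (nrob X t).+1 by lia.
  case: (Hnew e') => a b c.
  rewrite ek a c /inherited_status b (_ : t.+1 - 2 * nrob X t = 0) //; lia.
have Hpred' : forall r, 0 < r < n' -> rpred X r = r.-1.
  move=> r hr; case: (ltnP r (nrob X t)) => h; first by apply: Hpred; lia.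
  have ek : r = nrob X t by lia.
  have e' : n' = (nrob X t).+1 by lia.
  by case: (Hnew e') => a b c; rewrite ek.
have Hold : forall r t', L <= r < n' -> 2 * r <= t' <= t ->
    rpos X r t' = Some (nth s (s :: S0) (t' - 2 * r)).
  by move=> r t' h1 h2; apply: Hhist => //; lia.
have := Hstep L HLn.
rewrite /robot_step Hstat; last by lia.
rewrite eqxx => -[p [HpL Hcase]].
have Hp : p = nth s (s :: S0) (size S0).
  move: HpL; rewrite Hhist; [|lia|lia].
  by rewrite (_ : t - 2 * L = size S0); [case|lia].
case: Hcase => [[Hfr [q [Hadj [Hfq [HqL HstL]]]]] | [Hnfr [HpL1 HstL]]].
-
  exists (rcons S0 q), Qs, L.
  have qV : q \notin s :: S0 ++ Qs.
    apply/negP => /Hvis [t' [h1 h2]]; case: Hfq => _ H; exact: H t' h1 h2.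
  have qR : q \in R by case: Hfq.
  have Hperm : perm_eq (s :: rcons S0 q ++ Qs) (q :: s :: S0 ++ Qs).
    rewrite cat_rcons -cat_cons -[q :: Qs]/([:: q] ++ Qs) perm_catCA.
    exact: perm_refl.
  have Hnth : forall i, i <= size S0 -> nth s (s :: rcons S0 q) i = nth s (s :: S0) i.
    by move=> i hi; rewrite -rcons_cons nth_rcons /= ltnS hi.
  have Hhist' : forall r t', L <= r < n' -> 2 * r <= t' <= t.+1 ->
      rpos X r t' = Some (nth s (s :: rcons S0 q) (t' - 2 * r)).
    move=> r t' h1 h2; case: (leqP t' t) => h3.
      by rewrite Hold; [rewrite Hnth //; lia|lia|lia].
    have et : t' = t.+1 by lia.
    subst t'; case: (ltnP L r) => h4.
      by case: (Hact r (ltac:(lia))) => -> _; rewrite Hnth //; lia.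
    have er : r = L by lia.
    subst r; rewrite HqL -rcons_cons nth_rcons /=.
    by rewrite (_ : t.+1 - 2 * L = (size S0).+1) ?ltnn ?eqxx //; lia.
  split; [split|split; [| | | |split]].
  + by rewrite En'; lia.
  + by rewrite size_rcons; lia.
  + exact: HQ.
  + by rewrite (perm_uniq Hperm) /= qV.
  + by rewrite (perm_all _ Hperm) /= qR.
  + by move=> r hr; apply: Hstop.
  + by rewrite En'.
  + rewrite En'; move=> r; elim: r => [|r IH] hr.
      have e : L = 0 by lia.
      by rewrite e eqxx -e HstL.
    case: (eqVneq r.+1 L) => [e|ne]; first by rewrite e HstL.
    case: (Hact r.+1 (ltac:(lia))) => _ ->; rewrite /= IH; last by lia.
    by case: (r == L).
  + by rewrite En'.
  + apply: (@vis_step t _ _ Hvis).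
    * move=> x; apply: (@occ_in t.+1 (rcons S0 q) Qs L) => //.
        by move=> r hr; case: (Hstop r hr).
      rewrite En' => r hr; apply: Hhist' => //; lia.
    * by move=> x hx; rewrite (perm_mem Hperm) in_cons hx orbT.
    * move=> x; rewrite (perm_mem Hperm) in_cons => /orP [/eqP ->|h]; last by left.
      by right; exists L.
  + move=> x hx y hxy hy.
    by rewrite (perm_mem Hperm) in_cons (Hcl x hx y hxy hy) orbT.
-
  case ES: S0 => [|y S1'].
    exfalso; apply: (Hnh t (leqnn t)).
    move: Hp; rewrite ES /= => ep; subst p.
    exists L; split => //; first by rewrite Hstat ?eqxx //; lia.
  have [S1 [x eS]] : exists S1 x, S0 = rcons S1 x.
    by exists (belast y S1'), (last y S1'); rewrite ES lastI.
  clear ES y S1'; subst S0.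
  have ep : p = x.
    by rewrite Hp -rcons_cons nth_rcons /= size_rcons ltnn eqxx.
  clear Hp; subst p.
  rewrite size_rcons in HS.
  exists S1, (rcons Qs x), L.+1.
  have Hperm : perm_eq (s :: S1 ++ rcons Qs x) (s :: rcons S1 x ++ Qs).
    by rewrite cat_rcons perm_cons perm_cat2l perm_rcons.
  have Hnth : forall i, i <= size S1 -> nth s (s :: rcons S1 x) i = nth s (s :: S1) i.
    by move=> i hi; rewrite -rcons_cons nth_rcons /= ltnS hi.
  have Hhist' : forall r t', L.+1 <= r < n' -> 2 * r <= t' <= t.+1 ->
      rpos X r t' = Some (nth s (s :: S1) (t' - 2 * r)).
    move=> r t' h1 h2; case: (leqP t' t) => h3.
      by rewrite Hold; [rewrite Hnth //; lia|lia|lia].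
    have et : t' = t.+1 by lia.
    subst t'.
    by case: (Hact r (ltac:(lia))) => -> _; rewrite Hnth //; lia.
  have Hstop' : forall r, r < L.+1 ->
      rpos X r t.+1 = Some (nth s (rcons Qs x) r) /\ rst X r t.+1 = Stopped.
    move=> r hr; case: (ltnP r L) => h.
      by rewrite nth_rcons HQ h; apply: Hstop.
    have er : r = L by lia.
    by rewrite er nth_rcons HQ ltnn eqxx HpL1 HstL.
  split; [split|split; [| | | |split]].
  + by rewrite En'; lia.
  + lia.
  + by rewrite size_rcons HQ.
  + by rewrite (perm_uniq Hperm).
  + by rewrite (perm_all _ Hperm).
  + by [].
  + by rewrite En'.
  + rewrite En'; move=> r; elim: r => [|r IH] hr; first by lia.
    case: (Hact r.+1 (ltac:(lia))) => _ ->; rewrite /=.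
    case: (eqVneq r L) => [e|ne].
      by rewrite e HstL eqxx.
    rewrite IH; last by lia.
    by case: (r == L.+1); rewrite eqSS (negbTE ne).
  + by rewrite En'.
  + apply: (@vis_step t _ _ Hvis).
    * move=> z; apply: (@occ_in t.+1 S1 (rcons Qs x) L.+1); first by rewrite size_rcons HQ.
        by move=> r hr; case: (Hstop' r hr).
      rewrite En' => r hr; apply: Hhist' => //; lia.
    * by move=> z hz; rewrite (perm_mem Hperm).
    * by move=> z; rewrite (perm_mem Hperm) => h; left.
  + move=> z; rewrite mem_rcons in_cons => /orP [/eqP ->|hz] w hw hwR.
      rewrite (perm_mem Hperm).
      case: (boolP (w \in s :: rcons S1 x ++ Qs)) => // hwV.
      exfalso; apply: Hnfr; exists w; split => //; split => //.
      move=> t' ht' ho; apply: (negP hwV); apply/Hvis; by exists t'.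
    by rewrite (perm_mem Hperm); apply: Hcl hz w hw hwR.
Qed.


Lemma card_le (l : seq pixel) : uniq l -> all (fun x => x \in R) l -> size l <= #|` R|.
Proof.
move=> u a; rewrite -(undup_id u) -card_fseq; apply: fsubset_leq_card.
by apply/fsubsetP => x; rewrite inE => h; exact: (allP a x h).
Qed.

Lemma card_ge (l : seq pixel) : uniq l -> (forall x, x \in R -> x \in l) -> #|` R| <= size l.
Proof.
move=> u a; rewrite -(undup_id u) -card_fseq; apply: fsubset_leq_card.
by apply/fsubsetP => x h; rewrite inE; exact: a.
Qed.

Lemma inv0 : s \in R -> Inv 0.
Proof.
move=> sR; case: Hrun => H0 H1 H2 H3 _.
exists [::], [::], 0; split; first by split => //=; rewrite ?H0 ?sR.
split => //.
- move=> r t'; rewrite H0 => h1 h2.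
  have -> : r = 0 by lia.
  have -> : t' = 0 by lia.
  by rewrite H1.
- move=> r; rewrite H0 => h1; have -> : r = 0 by lia. by rewrite H2.
- move=> r; rewrite H0; lia.
split => // x; split.
- case=> t' [h1 [k hk]].
  have e : t' = 0 by lia.
  subst t'; case: (leqP (nrob X 0) k) => h; first by rewrite H3 in hk.
  rewrite H0 in h; have ek : k = 0 by lia.
  by move: hk; rewrite ek H1 => -[<-]; rewrite mem_head.
- rewrite /= in_cons orbF => /eqP ->; exists 0; split => //; exists 0; exact: H1.
Qed.

Lemma inv_all t : s \in R -> (forall t', t' < t -> ~ halts_at R s X t') ->
  forall u, u <= t -> Inv u.
Proof.
move=> sR; elim: t => [|t IH] Hh u hu.
  have -> : u = 0 by lia.
  exact: inv0.
have IH' := IH (fun t' h => Hh t' (ltnW h)).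
case: (leqP u t) => h; first exact: IH'.
have -> : u = t.+1 by lia.
apply: inv_step.
- by move=> t' h'; apply: Hh; lia.
- exact: IH'.
- move=> _; apply: IH'; lia.
Qed.

Lemma inv_bound t : Inv t -> t <= 2 * #|` R|.
Proof.
case=> S0 [Qs [L [[Hn HS HQ Hu Hall] _]]].
have := card_le _ Hu Hall; rewrite /= size_cat; lia.
Qed.

Lemma occ_halts t : Inv t -> all_occupied R X t -> halts_at R s X t.
Proof.
move=> Ht Hocc.
have onSt := @onS t Ht.
case: Ht => S0 [Qs [L [[Hn HS HQ Hu Hall] [Hst Hhist Hstat Hpred [Hvis Hcl]]]]].
case ES: S0 => [|y S1].
- subst S0; rewrite /= in HS; exists L; split; first by lia.
  split; [|split].
  + by rewrite Hstat ?eqxx //; lia.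
  + rewrite Hhist; [|lia|lia]. by rewrite (_ : t - 2 * L = 0) //; lia.
  + case=> q [hq [qR qF]].
    by case: (Hocc q qR) => k hk; apply: (qF t (leqnn t)); exists k.
- exfalso; subst S0.
  have sR : s \in R by move: Hall => /andP [].
  case: (Hocc s sR) => k' /onSt hk'.
  have yR : y \in R by move: Hall => /= /and3P [_ ->].
  case: (Hocc y yR) => k hk.
  case: (leqP (nrob X t) k) => h1; first by rewrite rpos_none in hk.
  case: (ltnP k L) => h2.
    move: hk; rewrite (proj1 (Hst k h2)) => -[e].
    move: Hu; rewrite /= => /and3P [_ hy _].
    by move: hy; rewrite mem_cat -e mem_nth ?HQ // orbT.
  move: hk; rewrite Hhist; [|lia|lia] => -[e].
  have u0 : uniq (s :: y :: S1) by move: Hu; rewrite -cat_cons cat_uniq => /andP [].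
  have hlt : t - 2 * k < size [:: s, y & S1] by rewrite /= in HS *; lia.
  have := @nth_uniq _ s (s :: y :: S1) (t - 2 * k) 1 hlt isT u0.
  rewrite e /= eqxx => /esym /eqP; lia.
Qed.

Lemma min_ex (P : nat -> Prop) : forall n, P n -> exists m, P m /\ (forall k, k < m -> ~ P k).
Proof.
elim/ltn_ind => n IH Pn.
case: (classic (exists k, k < n /\ P k)) => [[k [hk Pk]]|H]; first exact: IH k hk Pk.
by exists n; split => // k hk Pk; apply: H; exists k.
Qed.

Lemma main_sec : s \in R -> env_connected R ->
  exists T : nat,
    [/\ halts_at R s X T, (forall t, t < T -> ~ halts_at R s X t),
        all_occupied R X T, (forall t, t < T -> ~ all_occupied R X t) &
        T.+1 = 2 * #|` R| - 1].
Proof.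
move=> sR Hcon.
have [t0 Ht0] : exists t, halts_at R s X t.
  apply: NNPP => H.
  have Hi := @inv_all (2 * #|` R|).+1 sR (fun t' _ h => H (ex_intro _ t' h)) _ (leqnn _).
  have := inv_bound _ Hi; lia.
have [T [HT Hmin]] := @min_ex _ _ Ht0.
have HiT := @inv_all T sR Hmin T (leqnn T).
exists T.
have onST := @onS T HiT.
have Hnocc : forall t, t < T -> ~ all_occupied R X t.
  move=> t ht Ho; apply: (Hmin t ht); apply: occ_halts => //.
  by apply: (@inv_all T sR Hmin t); lia.
case: (HiT) => S0 [Qs [L [[Hn HS HQ Hu Hall] [Hst Hhist Hstat Hpred [Hvis Hcl]]]]].
case: (HT) => k [hk [hL [hs hnf]]].
have hT := (proj1 (onST k)) hs.
have ekL : k = L.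
  case: (ltnP k L) => h; first by move: hL; rewrite (proj2 (Hst k h)).
  by move: hL; rewrite Hstat; [case: eqP|lia].
subst k.
have eS0 : S0 = [::] by apply/size0nil; lia.
subst S0; rewrite /= in Hvis Hcl.
have Hclo : forall p y, p \in s :: Qs -> adj p y -> y \in R -> y \in s :: Qs.
  move=> p y; rewrite in_cons => /orP [/eqP ->|hp] hy yR; last exact: Hcl p hp y hy yR.
  case: (boolP (y \in s :: Qs)) => // hyV; exfalso; apply: hnf.
  exists y; split => //; split => //.
  move=> t' ht' ho; apply: (negP hyV); apply/Hvis; by exists t'.
have Hpath : forall l p, p \in s :: Qs -> path adj p l ->
    all (fun x => x \in R) l -> last p l \in s :: Qs.
  elim=> [|y l IH] p hp //= /andP [hpy hpl] /andP [yR ha].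
  by apply: IH => //; exact: Hclo hp hpy yR.
have HR : forall q, q \in R -> q \in s :: Qs.
  move=> q qR; case: (Hcon s q sR qR) => l [hp [hl ha]]; rewrite -hl.
  exact: Hpath l s (mem_head _ _) hp ha.
split => //.
- move=> q /HR; rewrite in_cons => /orP [/eqP ->|hq]; first by exists L.
  exists (index q Qs); rewrite (proj1 (Hst _ _)) ?nth_index //.
  by rewrite -HQ index_mem.
- have := card_ge _ Hu HR; have := card_le _ Hu Hall; rewrite /=; lia.
Qed.


End Proof.

Local Open Scope fset_scope.
Theorem mainTheorem3 (R : {fset pixel}) (s : pixel) (X : run) :
  s \in R -> env_connected R -> is_dflf_run R s X ->
  exists T : nat,
    [/\ halts_at R s X T, (forall t, t < T -> ~ halts_at R s X t),
        all_occupied R X T, (forall t, t < T -> ~ all_occupied R X t) &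
        T.+1 = 2 * #|` R| - 1].
Proof. by move=> sR Hc Hr; apply: main_sec. Qed.
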